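(* Let $V\subseteq\mathcal V$ be finite and $\mathbb E,\mathbb F\in\mathit{NProg}(V)$. (1) $\mathbb E\le_T^e\mathbb F$ implies $\mathbb E\le_T^p\mathbb F$, but the converse fails in general. (2) $\mathbb E\le_P^e\mathbb F$ implies $\mathbb E\le_P^p\mathbb F$, but the converse fails in general.
   Context: $\mathcal V$ is a countably infinite set of qubit variables; $\mathcal H_V=\bigotimes_{q\in V}\mathcal H_q$. $\mathcal D(\mathcal H)$: partial density operators; $\mathcal P(\mathcal H)$: effects; $\mathcal S(\mathcal H)$: projectors. $\mathit{DProg}(V)$: completely positive trace-nonincreasing super-operators on $\mathcal L(\mathcal H_V)$; $\mathit{NProg}(V)$: nonempty convex closed subsets of $\mathit{DProg}(V)$. Operators/super-operators on subsystems are implicitly extended by tensoring with identities. For finite $W$ and $M,N\in\mathcal P(\mathcal H_W)$: $\mathbb E\models_{tot}(\{M\},\{N\})$ iff for all finite $X\supseteq V\cup W$ and $\rho\in\mathcal D(\mathcal H_X)$, ${\rm tr}(M\rho)\le\inf_{\mathcal E\in\mathbb E}{\rm tr}(N\mathcal E(\rho))$; $\mathbb E\models_{par}(\{M\},\{N\})$ iff for all such $X,\rho$, ${\rm tr}(M\rho)\le\inf_{\mathcal E\in\mathbb E}[{\rm tr}(N\mathcal E(\rho))+{\rm tr}(\rho)-{\rm tr}(\mathcal E(\rho))]$. $\mathbb E\le_T^e\mathbb F$ iff for every finite $W$ and all $M,N\in\mathcal P(\mathcal H_W)$, $\mathbb E\models_{tot}(\{M\},\{N\})\Rightarrow\mathbb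 F\models_{tot}(\{M\},\{N\})$; $\le_T^p$ is the same with $M,N$ restricted to projectors $\mathcal S(\mathcal H_W)$; $\le_P^e,\le_P^p$ likewise with $\models_{par}$. *)

(* Defs.v *)
From mathcomp Require Import all_boot all_order all_algebra.
From mathcomp Require Import finmap.
From mathcomp Require Import reals complex.
Set Implicit Arguments. Unset Strict Implicit. Unset Printing Implicit Defensive.
Import Order.TTheory GRing.Theory Num.Theory.
Local Open Scope ring_scope.
Local Open Scope complex_scope.

(* Qubit variables: the countably infinite set nat.  A finite set of
   variables is a {fset nat}.  The computational basis of
   H_X = (x)_{q in X} C^2 is indexed by assignments X -> bool. *)

Section QDefs.
Variable R : realType.
Local Notation C := R[i].

Definition OpT (T : finType) := T -> T -> C.

Definition trT (T : finType) (A : OpT T) : C := \sum_(b : T) A b b.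
Definition mulT (T : finType) (A B : OpT T) : OpT T :=
  fun i j => \sum_(k : T) A i k * B k j.
Definition adjT (T : finType) (A : OpT T) : OpT T := fun i j => (A j i)^*.
Definition idT (T : finType) : OpT T := fun i j => (i == j)%:R.

Definition psdT (T : finType) (A : OpT T) : Prop :=
  forall v : T -> C, 0 <= \sum_(i : T) \sum_(j : T) (v i)^* * A i j * v j.

Definition basis (X : {fset nat}) := {ffun X -> bool}.
Definition Op (X : {fset nat}) := OpT (basis X).

Definition pdo (X : {fset nat}) (rho : Op X) : Prop :=
  psdT rho /\ trT rho <= 1.
Definition effect (X : {fset nat}) (M : Op X) : Prop :=
  psdT M /\ psdT (fun i j => idT i j - M i j).
Definition projector (X : {fset nat}) (P : Op X) : Prop :=
  mulT P P = P /\ adjT P = P.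

Definition res (X W : {fset nat}) (b : basis X) : basis W :=
  [ffun w : W => if (insub (val w) : option X) is Some x then b x else false].
Arguments res {X} W b.

Definition glue (V Y X : {fset nat}) (i : basis V) (c : basis Y) : basis X :=
  [ffun x : X => if (insub (val x) : option V) is Some v then i v
                 else if (insub (val x) : option Y) is Some y then c y
                 else false].
Arguments glue {V Y} X i c.

(* cylindric extension M (x) I_{X \ W} of an operator on H_W to H_X (W <= X) *)
Definition extO (W X : {fset nat}) (M : Op W) : Op X :=
  fun b b' => M (res W b) (res W b') *
              (res (X `\` W)%fset b == res (X `\` W)%fset b')%:R.
Arguments extO {W} X M.

Definition SO (V : {fset nat}) := Op V -> Op V.

Definition linearSO (V : {fset nat}) (E : SO V) : Prop :=
  forall (a : C) (A B : Op V),
    E (fun i j => a * A i j + B i j) = (fun i j => a * E A i j + E B i j).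

(* id_n (x) E acting on L(C^n (x) H_V) *)
Definition amplSO (n : nat) (V : {fset nat}) (E : SO V) :
    OpT (('I_n * basis V)%type) -> OpT (('I_n * basis V)%type) :=
  fun rho p q => E (fun i j => rho (p.1, i) (q.1, j)) p.2 q.2.

Definition completely_positive (V : {fset nat}) (E : SO V) : Prop :=
  forall (n : nat) (rho : OpT (('I_n * basis V)%type)),
    psdT rho -> psdT (amplSO E rho).

Definition trace_nonincreasing (V : {fset nat}) (E : SO V) : Prop :=
  forall rho : Op V, psdT rho -> trT (E rho) <= trT rho.

Definition DProg (V : {fset nat}) (E : SO V) : Prop :=
  [/\ linearSO E, completely_positive E & trace_nonincreasing E].

Definition cconv (x : nat -> C) (l : C) : Prop :=
  forall e : R, 0 < e -> exists N : nat, forall n : nat, (N <= n)%N ->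
    `|x n - l| < e%:C.

Definition convexSO (V : {fset nat}) (S : SO V -> Prop) : Prop :=
  forall (E F : SO V) (p : R), S E -> S F -> 0 <= p <= 1 ->
    S (fun A i j => p%:C * E A i j + (1 - p)%:C * F A i j).

Definition closedSO (V : {fset nat}) (S : SO V -> Prop) : Prop :=
  forall (En : nat -> SO V) (E : SO V), (forall n, S (En n)) ->
    (forall (A : Op V) (i j : basis V), cconv (fun n => En n A i j) (E A i j)) ->
    S E.

Definition NProg (V : {fset nat}) (S : SO V -> Prop) : Prop :=
  [/\ exists E, S E, forall E, S E -> DProg E, convexSO S & closedSO S].

(* E (x) I_{X \ V} : the extension of a super-operator on L(H_V) to L(H_X) *)
Definition extSO (V X : {fset nat}) (E : SO V) : SO X :=
  fun rho b b' =>
    E (fun i j => rho (glue X i (res (X `\` V)%fset b)) (glue X j (res (X `\` V)%fset b')))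
      (res V b) (res V b').
Arguments extSO {V} X E.

(* tr(M rho) <= inf_{E in S} tr(N E(rho)) is written as: for all E in S,
   tr(M rho) <= tr(N E(rho)) (definition of the infimum as greatest lower bound). *)
Definition sat_tot (V : {fset nat}) (S : SO V -> Prop) (W : {fset nat})
    (M N : Op W) : Prop :=
  forall X : {fset nat}, (V `|` W `<=` X)%fset ->
  forall rho : Op X, pdo rho ->
  forall E : SO V, S E ->
    trT (mulT (extO X M) rho) <= trT (mulT (extO X N) (extSO X E rho)).

Definition sat_par (V : {fset nat}) (S : SO V -> Prop) (W : {fset nat})
    (M N : Op W) : Prop :=
  forall X : {fset nat}, (V `|` W `<=` X)%fset ->
  forall rho : Op X, pdo rho ->
  forall E : SO V, S E ->
    trT (mulT (extO X M) rho) <=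
      trT (mulT (extO X N) (extSO X E rho)) + trT rho - trT (extSO X E rho).

Definition le_Te (V : {fset nat}) (S T : SO V -> Prop) : Prop :=
  forall (W : {fset nat}) (M N : Op W), effect M -> effect N ->
    sat_tot S M N -> sat_tot T M N.
Definition le_Tp (V : {fset nat}) (S T : SO V -> Prop) : Prop :=
  forall (W : {fset nat}) (M N : Op W), projector M -> projector N ->
    sat_tot S M N -> sat_tot T M N.
Definition le_Pe (V : {fset nat}) (S T : SO V -> Prop) : Prop :=
  forall (W : {fset nat}) (M N : Op W), effect M -> effect N ->
    sat_par S M N -> sat_par T M N.
Definition le_Pp (V : {fset nat}) (S T : SO V -> Prop) : Prop :=
  forall (W : {fset nat}) (M N : Op W), projector M -> projector N ->
    sat_par S M N -> sat_par T M N.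

End QDefs.

(* Main.v *)
Require Import Defs.
From mathcomp Require Import all_boot all_order all_algebra.
From mathcomp Require Import finmap.
From mathcomp Require Import reals complex boolp ring.
Set Implicit Arguments. Unset Strict Implicit. Unset Printing Implicit Defensive.
Import Order.TTheory GRing.Theory Num.Theory.
Local Open Scope ring_scope.
Local Open Scope complex_scope.

Section Ops.
Variable R : realType.
Local Notation C := R[i].
Variable T : finType.
Implicit Types A B D L P Q rho : OpT R T.
Local Notation I := (@idT R T).
Lemma conjE (x : C) : conjc x = Num.conj x.
Proof. reflexivity. Qed.
Lemma adjTE A : adjT A = fun i j => Num.conj (A j i).
Proof. reflexivity. Qed.

Definition subT A B : OpT R T := fun i j => A i j - B i j.
Definition scaleT (c : C) A : OpT R T := fun i j => c * A i j.
Definition zeroT : OpT R T := fun _ _ => 0.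
Definition ebT (b : T) : OpT R T := fun i j => (i == b)%:R * (j == b)%:R.
Definition projT P := mulT P P = P /\ adjT P = P.

Lemma sum_deltal (b : T) (F : T -> C) : \sum_(k : T) (k == b)%:R * F k = F b.
Proof.
rewrite (bigD1 b) //= eqxx mul1r big1 ?addr0 // => k /negbTE ->; by rewrite mul0r.
Qed.
Lemma sum_deltar (b : T) (F : T -> C) : \sum_(k : T) F k * (k == b)%:R = F b.
Proof. rewrite -(sum_deltal b F); apply: eq_bigr => k _; by rewrite mulrC. Qed.

Lemma mulTA A B D : mulT (mulT A B) D = mulT A (mulT B D).
Proof.
apply: funext => i; apply: funext => j; rewrite /mulT.
under eq_bigr do rewrite big_distrl /=.
rewrite exchange_big /=; apply: eq_bigr => k _.
rewrite big_distrr /=; apply: eq_bigr => l _; by rewrite mulrA.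
Qed.

Lemma mulT_subl A B D : mulT (subT A B) D = subT (mulT A D) (mulT B D).
Proof.
apply: funext => i; apply: funext => j; rewrite /mulT /subT -sumrB.
by apply: eq_bigr => k _; rewrite mulrBl.
Qed.
Lemma mulT_subr A B D : mulT A (subT B D) = subT (mulT A B) (mulT A D).
Proof.
apply: funext => i; apply: funext => j; rewrite /mulT /subT -sumrB.
by apply: eq_bigr => k _; rewrite mulrBr.
Qed.
Lemma mul1T A : mulT I A = A.
Proof.
apply: funext => i; apply: funext => j; rewrite /mulT /idT.
rewrite -(sum_deltal i (fun k => A k j)); apply: eq_bigr => k _; by rewrite eq_sym.
Qed.
Lemma mulT1 A : mulT A I = A.
Proof.
apply: funext => i; apply: funext => j; rewrite /mulT /idT.
by rewrite -(sum_deltar j (fun k => A i k)).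
Qed.
Lemma mulT_scaler c A B : mulT A (scaleT c B) = scaleT c (mulT A B).
Proof.
apply: funext => i; apply: funext => j; rewrite /mulT /scaleT big_distrr /=.
by apply: eq_bigr => k _; rewrite mulrCA.
Qed.
Lemma mulT_scalel c A B : mulT (scaleT c A) B = scaleT c (mulT A B).
Proof.
apply: funext => i; apply: funext => j; rewrite /mulT /scaleT big_distrr /=.
by apply: eq_bigr => k _; rewrite mulrA.
Qed.
Lemma mulT0 A : mulT A zeroT = zeroT.
Proof.
apply: funext => i; apply: funext => j; rewrite /mulT /zeroT big1 // => k _; by rewrite mulr0.
Qed.
Lemma trT_sub A B : trT (subT A B) = trT A - trT B.
Proof. by rewrite /trT /subT sumrB. Qed.
Lemma trT_scale c A : trT (scaleT c A) = c * trT A.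
Proof. by rewrite /trT /scaleT big_distrr. Qed.
Lemma trT0 : trT zeroT = 0.
Proof. by rewrite /trT /zeroT big1. Qed.
Lemma trT_mulC A B : trT (mulT A B) = trT (mulT B A).
Proof.
rewrite /trT /mulT exchange_big /=; apply: eq_bigr => i _; apply: eq_bigr => k _.
by rewrite mulrC.
Qed.
Lemma adjT_mul A B : adjT (mulT A B) = mulT (adjT B) (adjT A).
Proof.
apply: funext => i; apply: funext => j; rewrite /adjT /mulT !conjE rmorph_sum.
by apply: eq_bigr => k _; rewrite rmorphM mulrC.
Qed.
Lemma adjT_sub A B : adjT (subT A B) = subT (adjT A) (adjT B).
Proof. apply: funext => i; apply: funext => j; by rewrite /adjT /subT !conjE rmorphB. Qed.
Lemma adjT_id : adjT I = I.
Proof. apply: funext => i; apply: funext => j; by rewrite /adjT /idT conjE conjC_nat eq_sym. Qed.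
Lemma adjTK A : adjT (adjT A) = A.
Proof. apply: funext => i; apply: funext => j; by rewrite /adjT !conjE conjCK. Qed.
Lemma subTT A : subT A A = zeroT.
Proof. apply: funext => i; apply: funext => j; by rewrite /subT subrr. Qed.
Lemma subT0 A : subT A zeroT = A.
Proof. apply: funext => i; apply: funext => j; by rewrite /subT /zeroT subr0. Qed.

Definition qf (v : T -> C) A := \sum_(i : T) \sum_(j : T) Num.conj (v i) * A i j * v j.

Lemma psd_diag A b : psdT A -> 0 <= A b b.
Proof.
move=> /(_ (fun i => (i == b)%:R)).
suff -> : \sum_i \sum_j ((i == b)%:R)^* * A i j * (j == b)%:R = A b b by [].
rewrite -(sum_deltal b (fun i => A i b)); apply: eq_bigr => i _.
rewrite -(sum_deltar b (A i)) big_distrr /=; apply: eq_bigr => j _; by rewrite mulrA conjC_nat.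
Qed.
Lemma psd_tr A : psdT A -> 0 <= trT A.
Proof. move=> hA; rewrite /trT; apply: sumr_ge0 => b _; exact: psd_diag. Qed.

Lemma psd_conj rho L : psdT rho -> psdT (mulT (adjT L) (mulT rho L)).
Proof.
move=> hr v; have := hr (fun k => \sum_j L k j * v j).
congr (_ <= _); rewrite adjTE /mulT.
transitivity (\sum_k \sum_l \sum_i \sum_j Num.conj (v i) * Num.conj (L k i) * rho k l * (L l j * v j)).
  apply: eq_bigr => k _; apply: eq_bigr => l _.
  rewrite rmorph_sum !mulr_suml; apply: eq_bigr => i _.
  rewrite mulr_sumr; apply: eq_bigr => j _.
  by rewrite rmorphM (mulrC (Num.conj (L k i))).
transitivity (\sum_i \sum_j \sum_k \sum_l Num.conj (v i) * Num.conj (L k i) * rho k l * (L l j * v j)); last first.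
  apply: eq_bigr => i _; apply: eq_bigr => j _.
  rewrite mulr_sumr mulr_suml; apply: eq_bigr => k _.
  rewrite mulr_sumr mulr_sumr mulr_suml; apply: eq_bigr => l _.
  by rewrite !mulrA.
under eq_bigr do rewrite exchange_big /=.
rewrite exchange_big /=; apply: eq_bigr => i _.
under eq_bigr do rewrite exchange_big /=.
by rewrite exchange_big.
Qed.

Definition pdoT rho := psdT rho /\ trT rho <= 1.

Lemma projC P : projT P -> projT (subT I P).
Proof.
case=> hPP hPa; split.
  by rewrite mulT_subl mul1T !mulT_subr mulT1 hPP subTT subT0.
by rewrite adjT_sub adjT_id hPa.
Qed.

Lemma psd_sandwich P rho : adjT P = P -> psdT rho -> psdT (mulT P (mulT rho P)).
Proof. move=> hPa hr; have := psd_conj P hr; by rewrite hPa. Qed.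

Lemma psd_id : psdT I.
Proof.
move=> v; apply: sumr_ge0 => i _; rewrite (bigD1 i) //= big1 ?addr0.
  by rewrite /idT eqxx mulr1 mulrC mul_conjC_ge0.
by move=> j /negbTE; rewrite /idT eq_sym => ->; rewrite mulr0 mul0r.
Qed.

Lemma proj_psd P : projT P -> psdT P.
Proof.
case=> hPP hPa; have := psd_sandwich hPa psd_id.
by rewrite mul1T hPP.
Qed.

Lemma proj_tr_ge0 P rho : projT P -> psdT rho -> 0 <= trT (mulT P rho).
Proof.
case=> hPP hPa hr.
have -> : trT (mulT P rho) = trT (mulT P (mulT rho P)).
  by rewrite -{1}hPP mulTA trT_mulC mulTA.
exact/psd_tr/psd_sandwich.
Qed.

Lemma proj_tr_le Q s : projT Q -> psdT s -> trT (mulT Q s) <= trT s.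
Proof.
move=> hQ hs; have := proj_tr_ge0 (projC hQ) hs.
by rewrite mulT_subl mul1T trT_sub subr_ge0.
Qed.

Lemma tr_sandwich P rho : projT P -> trT (mulT P (mulT rho P)) = trT (mulT P rho).
Proof. case=> hPP _; by rewrite trT_mulC mulTA hPP trT_mulC. Qed.

Lemma tr_sandwich2 P rho : projT P ->
  trT (mulT P (mulT P (mulT rho P))) = trT (mulT P rho).
Proof. move=> hP; case: (hP) => hPP _; by rewrite -mulTA hPP tr_sandwich. Qed.

Lemma pdo_sandwich P rho : projT P -> pdoT rho -> pdoT (mulT P (mulT rho P)).
Proof.
move=> hP [hr ht]; split; first by case: hP => _ hPa; exact: psd_sandwich.
rewrite tr_sandwich //; exact: le_trans (proj_tr_le hP hr) ht.
Qed.

Lemma psd_eb b : psdT (ebT b).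
Proof.
move=> v; rewrite /ebT.
have -> : \sum_i \sum_j Num.conj (v i) * ((i == b)%:R * (j == b)%:R) * v j
   = Num.conj (v b) * v b.
  transitivity (\sum_i \sum_j (j == b)%:R * (Num.conj (v i) * (i == b)%:R * v j)).
    by apply: eq_bigr => i _; apply: eq_bigr => j _; ring.
  under eq_bigr do rewrite sum_deltal.
  transitivity (\sum_i (i == b)%:R * (Num.conj (v i) * v b)).
    by apply: eq_bigr => i _; ring.
  by rewrite sum_deltal.
by rewrite mulrC mul_conjC_ge0.
Qed.

Lemma tr_eb b : trT (ebT b) = 1.
Proof.
rewrite /trT /ebT (sum_deltal b (fun i => (i == b)%:R)).
by rewrite eqxx.
Qed.

Lemma pdo_eb b : pdoT (ebT b).
Proof. by split; [exact: psd_eb | rewrite tr_eb]. Qed.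

Lemma tr_mul_eb A b : trT (mulT A (ebT b)) = A b b.
Proof.
rewrite /trT /mulT /ebT.
transitivity (\sum_i \sum_k (k == b)%:R * (A i k * (i == b)%:R)).
  by apply: eq_bigr => i _; apply: eq_bigr => k _; ring.
under eq_bigr do rewrite sum_deltal.
transitivity (\sum_i (i == b)%:R * A i b).
  by apply: eq_bigr => i _; ring.
by rewrite sum_deltal.
Qed.

Lemma psd_scale c A : 0 <= c -> psdT A -> psdT (scaleT c A).
Proof.
move=> hc hA v; rewrite /scaleT.
have -> : \sum_i \sum_j Num.conj (v i) * (c * A i j) * v j =
   c * (\sum_i \sum_j Num.conj (v i) * A i j * v j).
  rewrite mulr_sumr; apply: eq_bigr => i _; rewrite mulr_sumr; apply: eq_bigr => j _.
  by rewrite !mulrA [Num.conj (v i) * c]mulrC.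
exact: mulr_ge0 (hA v).
Qed.

End Ops.

Section Basis.
Local Unset Implicit Arguments.
Local Open Scope fset_scope.

Lemma resE (W X : {fset nat}) (b : basis X) (w : W) (x : X) : val w = val x -> res W b w = b x.
Proof.
move=> e; rewrite /res ffunE; case: insubP => [x' _ hx'|].
  by congr (b _); apply: val_inj; rewrite hx' e.
by rewrite e (valP x).
Qed.

Lemma glueW (W X Y : {fset nat}) (i : basis W) (c : basis Y) (x : X) (w : W) :
  val x = val w -> glue X i c x = i w.
Proof.
move=> e; rewrite /glue ffunE; case: insubP => [w' _ hw'|].
  by congr (i _); apply: val_inj; rewrite hw' e.
by rewrite e (valP w).
Qed.

Lemma glueY (W X Y : {fset nat}) (i : basis W) (c : basis Y) (x : X) (y : Y) :
  val x = val y -> val x \notin W -> glue X i c x = c y.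
Proof.
move=> e hW; rewrite /glue ffunE; case: insubP => [w' hw' _|_]; first by rewrite hw' in hW.
case: insubP => [y' _ hy'|]; first by congr (c _); apply: val_inj; rewrite hy' e.
by rewrite e (valP y).
Qed.

Variables W X : {fset nat}.
Local Notation D := (X `\` W).
Hypothesis hW : W `<=` X.

Lemma glue_res (b : basis X) : glue X (res W b) (res D b) = b.
Proof.
apply/ffunP => x; case: (boolP (val x \in W)) => hx.
  rewrite (glueW _ _ _ _ _ x [` hx]) //; exact: (resE _ _ b [` hx] x).
have hy : val x \in D by rewrite in_fsetD hx (valP x).
by rewrite (glueY _ _ _ _ _ x [` hy]) // (resE _ _ _ _ x).
Qed.

Lemma res_glueW (i : basis W) (c : basis D) : res W (glue X i c) = i.
Proof.
apply/ffunP => w; have hx : val w \in X := fsubsetP hW _ (valP w).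
by rewrite (resE _ _ _ _ [` hx]) // (glueW _ _ _ _ _ _ w).
Qed.

Lemma res_glueD (i : basis W) (c : basis D) : res D (glue X i c) = c.
Proof.
apply/ffunP => y; have := valP y; rewrite in_fsetD => /andP [hy1 hy2].
by rewrite (resE _ _ _ _ [` hy2]) // (glueY _ _ _ _ _ _ y).
Qed.

Lemma sum_split (Z : nmodType) (F : basis X -> Z) :
  \sum_(k : basis X) F k = \sum_(w : basis W) \sum_(d : basis D) F (glue X w d).
Proof.
rewrite pair_big /=.
rewrite (reindex (fun p : basis W * basis D => glue X p.1 p.2)) //=.
apply: onW_bij; exists (fun k => (res W k, res D k)).
  by case=> i c /=; rewrite res_glueW res_glueD.
by move=> k /=; rewrite glue_res.
Qed.

Variable R : realType.
Local Notation ext A := (@extO R W X A).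

Lemma extO_mul (A B : Op R W) : mulT (ext A) (ext B) = ext (mulT A B).
Proof.
apply: funext => b; apply: funext => b'; rewrite /mulT /extO sum_split.
under eq_bigr do under eq_bigr do rewrite res_glueW res_glueD.
rewrite mulr_suml; apply: eq_bigr => w _.
transitivity (\sum_(d : basis D) (d == res D b)%:R *
   (A (res W b) w * B w (res W b') * (d == res D b')%:R)).
  by apply: eq_bigr => d _; rewrite [(res D b == d)]eq_sym; ring.
by rewrite sum_deltal.
Qed.

Lemma extO_adj (A : Op R W) : adjT (ext A) = ext (adjT A).
Proof.
apply: funext => b; apply: funext => b'; rewrite !adjTE /extO rmorphM.
congr (_ * _); rewrite eq_sym; exact: conjC_nat.
Qed.

Lemma extO_id : ext (@idT R (basis W)) = @idT R (basis X).
Proof.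
apply: funext => b; apply: funext => b'; rewrite /extO /idT.
case: (b =P b') => [->|ne]; first by rewrite !eqxx mulr1.
have : ~~ ((res W b == res W b') && (res D b == res D b')).
  apply/negP => /andP [/eqP e1 /eqP e2]; apply: ne.
  by rewrite -(glue_res b) e1 e2 glue_res.
by case/nandP => /negbTE ->; rewrite ?mul0r ?mulr0.
Qed.

Lemma extO_scale c (A : Op R W) : ext (scaleT c A) = scaleT c (ext A).
Proof. apply: funext => b; apply: funext => b'; by rewrite /extO /scaleT mulrA. Qed.

Lemma extO_proj (P : Op R W) : projT P -> projT (ext P).
Proof. by case=> h1 h2; split; rewrite ?extO_mul ?extO_adj ?h1 ?h2. Qed.

Lemma extSO_scale c (rho : Op R X) :
  @extSO R W X (@scaleT R (basis W) c) rho = scaleT c rho.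
Proof. apply: funext => b; apply: funext => b'; by rewrite /extSO /scaleT !glue_res. Qed.

End Basis.
Arguments extO_proj {W X} hW {R P} _.
Arguments extSO_scale {W X R} c rho.
Arguments extO_scale {W X R} c A.
Arguments extO_id {W X R}.


Section NP.
Local Unset Implicit Arguments.
Variable R : realType.
Local Notation C := R[i].

Definition Sc (V : {fset nat}) (c : C) : SO R V -> Prop := fun E => E = @scaleT R (basis V) c.

Lemma cconv_const (x l : C) : cconv (fun _ => x) l -> l = x.
Proof.
move=> h; apply/eqP; rewrite eq_sym -subr_eq0; apply/negPn/negP => hz.
have := normr_gt0 (x - l); rewrite hz normc_def ltcE /= => /andP [_ he].
have [N /(_ N (leqnn N))] := h _ he.
by rewrite normc_def ltxx.
Qed.

Lemma NProg_scale V (c : C) : 0 <= c -> c <= 1 -> NProg (Sc V c).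
Proof.
move=> c0 c1; split.
- by exists (scaleT c).
- move=> E ->; split.
  + move=> a A B; apply: funext => i; apply: funext => j; rewrite /scaleT; ring.
  + move=> n rho hr.
    have -> : amplSO (@scaleT R (basis V) c) rho = scaleT c rho.
      by apply: funext => -[p1 p2]; apply: funext => -[q1 q2].
    exact: psd_scale.
  + move=> rho hr; rewrite trT_scale; exact: ler_piMl (psd_tr hr) c1.
- move=> E F p -> -> _; apply: funext => A; apply: funext => i; apply: funext => j.
  rewrite /scaleT rmorphB rmorph1; ring.
- move=> En E hEn hc; apply: funext => A; apply: funext => i; apply: funext => j.
  apply: cconv_const; have := hc A i j.
  by under eq_fun do rewrite hEn.
Qed.
End NP.

Section Main.
Variable R : realType.
Local Notation C := R[i].
Local Open Scope fset_scope.

Definition hf : C := 2%:R^-1.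
Lemma hf_gt0 : 0 < hf. Proof. by rewrite /hf invr_gt0 ltr0n. Qed.
Lemma hf_lt1 : hf < 1. Proof. by rewrite /hf invf_lt1 ?ltr0n // ltr1n. Qed.
Lemma hf_ge0 : 0 <= hf. Proof. exact: ltW hf_gt0. Qed.
Lemma hf_le1 : hf <= 1. Proof. exact: ltW hf_lt1. Qed.

Lemma key_tot (a q h : C) : 0 <= h -> h < 1 -> a <= h * q -> q <= a -> a <= 0.
Proof.
move=> h0 h1 haq hqa.
have hha : a <= h * a := le_trans haq (ler_wpM2l h0 hqa).
have : (1 - h) * a <= 0 by rewrite mulrBl mul1r subr_le0.
by rewrite pmulr_rle0 // subr_gt0.
Qed.

Lemma key_par (t q h : C) : 0 < h -> t <= h * q + t - h * t -> t <= q.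
Proof.
move=> h0 H.
have e : h * q + t - h * t - t = h * (q - t) by ring.
by move: H; rewrite -subr_ge0 e pmulr_rge0 // subr_ge0.
Qed.

Lemma effect_scale W (c : C) : 0 <= c -> c <= 1 ->
  effect (@scaleT R (basis W) c (@idT R (basis W))).
Proof.
move=> c0 c1; split; first exact: psd_scale c0 (@psd_id R _).
have -> : (fun i j => @idT R (basis W) i j - scaleT c (@idT R (basis W)) i j)
   = scaleT (1 - c) (@idT R (basis W)).
  by apply: funext => i; apply: funext => j; rewrite /scaleT; ring.
by apply: psd_scale; [rewrite subr_ge0 | exact: psd_id].
Qed.

Lemma proj_effect W (P : Op R W) : projector P -> effect P.
Proof. move=> hP; split; [exact: proj_psd | exact: proj_psd (projC hP)]. Qed.

Lemma sub0W (W X : {fset nat}) : fset0 `|` W `<=` X -> W `<=` X.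
Proof. by rewrite fset0U. Qed.

Lemma scale1T T (A : OpT R T) : scaleT 1 A = A.
Proof. apply: funext => i; apply: funext => j; by rewrite /scaleT mul1r. Qed.

Definition b0 : basis fset0 := [ffun _ => false].

Lemma part1 (V : {fset nat}) (E F : SO R V -> Prop) :
  (le_Te E F -> le_Tp E F) /\ (le_Pe E F -> le_Pp E F).
Proof.
split=> h W M N hM hN; apply: h; exact: proj_effect.
Qed.

Lemma le_Tp_ex : le_Tp (Sc R fset0 hf) (Sc R fset0 0).
Proof.
move=> W M N hM hN hS X hX rho hr E ->.
have hWX := sub0W hX.
have hP := extO_proj hWX hM; have hQ := extO_proj hWX hN.
set P := @extO R W X M in hP *; set Q := @extO R W X N in hQ *.
rewrite extSO_scale mulT_scaler trT_scale mul0r.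
have hr' := pdo_sandwich hP hr.
have := hS X hX _ hr' _ erefl.
rewrite extSO_scale mulT_scaler trT_scale -/P -/Q tr_sandwich2 // => h1.
have := proj_tr_le hQ hr'.1; rewrite tr_sandwich // => h2.
exact: key_tot hf_ge0 hf_lt1 h1 h2.
Qed.

Lemma not_le_Te_ex : ~ le_Te (Sc R fset0 hf) (Sc R fset0 0).
Proof.
move=> h.
have hM := effect_scale fset0 hf_ge0 hf_le1.
have hN := effect_scale fset0 ler01 (lexx (1 : C)).
have hS : sat_tot (Sc R fset0 hf) (scaleT hf (@idT R (basis fset0))) (scaleT 1 (@idT R (basis fset0))).
  move=> X hX rho hr E ->.
  have hWX := sub0W hX.
  rewrite extSO_scale !extO_scale extO_id.
  by rewrite mulT_scaler !mulT_scalel !trT_scale mul1r.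
have h00 : (fset0 : {fset nat}) `|` fset0 `<=` fset0 by rewrite fset0U fsubset_refl.
have := h _ _ _ hM hN hS fset0 h00 _ (@pdo_eb R _ b0) _ erefl.
have hWX : (fset0 : {fset nat}) `<=` fset0 := fsub0set _.
rewrite extSO_scale !extO_scale extO_id.
rewrite mulT_scaler !mulT_scalel !trT_scale mul1T tr_eb mulr1 !mul0r => h0.
by have := lt_le_trans hf_gt0 h0; rewrite ltxx.
Qed.

Lemma le_Pp_ex : le_Pp (Sc R fset0 hf) (Sc R fset0 1).
Proof.
move=> W M N hM hN hS X hX rho hr E ->.
have hWX := sub0W hX.
have hP := extO_proj hWX hM; have hQ := extO_proj hWX hN.
set P := @extO R W X M in hP *; set Q := @extO R W X N in hQ *.
rewrite extSO_scale scale1T addrK.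
case: (hP) => hPP hPa; case: (hQ) => hQQ hQa.
set A := subT (@idT R (basis X)) Q.
have hA : projT A := projC hQ.
set K := mulT A P.
have hK : forall i b, K i b = 0.
  move=> i b.
  have hr' := pdo_sandwich hP (@pdo_eb R _ b).
  have := hS X hX _ hr' _ erefl.
  rewrite extSO_scale mulT_scaler !trT_scale -/P -/Q tr_sandwich2 //.
  rewrite tr_sandwich // => /(key_par hf_gt0) h1.
  have h2 : trT (mulT A (mulT P (mulT (ebT R b) P))) <= 0.
    by rewrite /A mulT_subl mul1T trT_sub tr_sandwich // subr_le0.
  have e1 : trT (mulT A (mulT P (mulT (ebT R b) P))) = mulT (adjT K) K b b.
    rewrite -mulTA -mulTA trT_mulC -mulTA tr_mul_eb /K adjT_mul hPa.
    by case: hA => hAA hAa; rewrite hAa !mulTA -(mulTA A A) hAA.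
  have e2 : mulT (adjT K) K b b = \sum_k Num.conj (K k b) * K k b by [].
  rewrite e1 e2 in h2.
  have hge : forall k, 0 <= Num.conj (K k b) * K k b.
    by move=> k; rewrite mulrC mul_conjC_ge0.
  have h0 : \sum_k Num.conj (K k b) * K k b = 0.
    by apply: le_anti; rewrite h2 sumr_ge0.
  move: (psumr_eq0P (fun k _ => hge k) h0) => hall; have := hall i isT.
  by move/eqP; rewrite mulrC mul_conjC_eq0 => /eqP.
have hQP : mulT Q P = P.
  apply: funext => i; apply: funext => b; have := hK i b.
  rewrite /K /A mulT_subl mul1T /subT => /eqP; rewrite subr_eq0 => /eqP ->.
  by [].
have hPQ : mulT P Q = P.
  by have := congr1 (@adjT R _) hQP; rewrite adjT_mul hQa hPa.
have hQmP : projT (subT Q P).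
  split; last by rewrite adjT_sub hQa hPa.
  by rewrite mulT_subl !mulT_subr hQQ hQP hPQ hPP subTT subT0.
have := proj_tr_ge0 hQmP hr.1.
by rewrite mulT_subl trT_sub subr_ge0.
Qed.

Lemma not_le_Pe_ex : ~ le_Pe (Sc R fset0 hf) (Sc R fset0 1).
Proof.
move=> h.
have hM := effect_scale fset0 hf_ge0 hf_le1.
have hN := effect_scale fset0 (lexx (0 : C)) ler01.
have hS : sat_par (Sc R fset0 hf) (scaleT hf (@idT R (basis fset0))) (scaleT 0 (@idT R (basis fset0))).
  move=> X hX rho hr E ->.
  have hWX := sub0W hX.
  rewrite extSO_scale !extO_scale extO_id.
  rewrite mulT_scaler !mulT_scalel !trT_scale mul1T mul0r mulr0 add0r.
  have -> : trT rho - hf * trT rho = hf * trT rho by rewrite /hf; field.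
  by [].
have h00 : (fset0 : {fset nat}) `|` fset0 `<=` fset0 by rewrite fset0U fsubset_refl.
have := h _ _ _ hM hN hS fset0 h00 _ (@pdo_eb R _ b0) _ erefl.
have hWX : (fset0 : {fset nat}) `<=` fset0 := fsub0set _.
rewrite extSO_scale !extO_scale extO_id scale1T.
rewrite !mulT_scalel !trT_scale mul1T tr_eb mulr1 !mul0r add0r subrr => h0.
by have := lt_le_trans hf_gt0 h0; rewrite ltxx.
Qed.

End Main.

Theorem proposition5p9 (R : realType) :
  (forall (V : {fset nat}) (E F : SO R V -> Prop), NProg E -> NProg F ->
     (le_Te E F -> le_Tp E F) /\ (le_Pe E F -> le_Pp E F)) /\
  (exists (V : {fset nat}) (E F : SO R V -> Prop),
     [/\ NProg E, NProg F, le_Tp E F & ~ le_Te E F]) /\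
  (exists (V : {fset nat}) (E F : SO R V -> Prop),
     [/\ NProg E, NProg F, le_Pp E F & ~ le_Pe E F]).
Proof.
split; first by move=> V E F _ _; exact: part1.
split.
  exists fset0%fset, (Sc R fset0%fset (hf R)), (Sc R fset0%fset 0); split.
  - exact: NProg_scale (hf_ge0 R) (hf_le1 R).
  - exact: NProg_scale (lexx 0) ler01.
  - exact: le_Tp_ex.
  - exact: not_le_Te_ex.
exists fset0%fset, (Sc R fset0%fset (hf R)), (Sc R fset0%fset 1); split.
- exact: NProg_scale (hf_ge0 R) (hf_le1 R).
- exact: NProg_scale ler01 (lexx 1).
- exact: le_Pp_ex.
- exact: not_le_Pe_ex.
Qed.
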